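(* Let $n\in\mathbb N$, $n\ge 2$, let $t\in[a,b]$ and let $f_j:[a,b]\to\mathbb F$, $j=1,\dots,n$, be $g$-differentiable at $t$. Then the product $\prod_{j=1}^n f_j$ is $g$-differentiable at $t$ and \[\Big(\prod_{j=1}^nf_j\Big)_g'(t)=\sum_{k=0}^{n-1}(\Delta g(t^* ))^k\Big(\sum_{\sigma\in F_{n,k+1}}\prod_{j=1}^n(f_j)^{(\sigma_j)}_g(t^* )\Big),\] where the factor $(\Delta g(t^* ))^0$ is interpreted as $1$.
   Context: Let $g:\mathbb R\to\mathbb R$ be nondecreasing and left-continuous, and $\mathbb F\in\{\mathbb R,\mathbb C\}$. For $t\in\mathbb R$ let $\Delta g(t)=g(t^+)-g(t)$, where $g(t^+)$ is the right-hand limit. Let $D_g=\{t\in\mathbb R:\Delta g(t)>0\}$ and $C_g=\{t\in\mathbb R: g \text{ is constant on }(t-\varepsilon,t+\varepsilon)\text{ for some }\varepsilon>0\}$; $C_g$ is open and is uniquely written as a countable union of pairwise disjoint open intervals $C_g=\bigcup_{n\in\Lambda}(a_n,b_n)$ (its connected components). Let $N_g^-=\{a_n:n\in\Lambda\}\setminus D_g$, $N_g^+=\{b_n:n\in\Lambda\}\setminus D_g$, $N_g=N_g^-\cup N_g^+$. Fix $a<b$ with $a\notin N_g^-$ and $b\notin D_g\cup C_g\cup N_g^+$. For $t\in[a,b]$ put $t^*=t$ if $t\notin C_g$ and $t^*=b_n$ if $t\in(a_n,b_n)$. The $g$-derivative of $f:[a,b]\to\mathbb F$ at $t\in[a,b]$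 is $f'_g(t)=\lim_{s\to t}\frac{f(s)-f(t)}{g(s)-g(t)}$ if $t\notin D_g\cup C_g$, and $f'_g(t)=\lim_{s\to t^{*+}}\frac{f(s)-f(t^* )}{g(s)-g(t^* )}$ if $t\in D_g\cup C_g$, provided the (finite) limit exists, in which case $f$ is called $g$-differentiable at $t$; the limits are over $s\in[a,b]$ with $g(s)$ different from the value in the denominator, and at points of $N_g^+\cup\{a\}$ only the right-hand limit is taken while at points of $N_g^-\cup\{b\}$ only the left-hand limit is taken. Notation: $f^{(0)}_g=f$, $f^{(1)}_g=f'_g$; for $\sigma=(\sigma_1,\dots,\sigma_n)\in\{0,1\}^n$, $|\sigma|$ is the number of indices $j$ with $\sigma_j=1$, and $F_{n,k}=\{\sigma\in\{0,1\}^n:|\sigma|=k\}$. *)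

(* Defs.v *)
From HB Require Import structures.
From mathcomp Require Import all_boot all_order all_algebra.
From mathcomp Require Import all_classical all_reals all_analysis.
From mathcomp Require Import complex.
Import Order.TTheory GRing.Theory Num.Theory numFieldNormedType.Exports.

Set Implicit Arguments.
Unset Strict Implicit.
Unset Printing Implicit Defensive.

Local Open Scope ring_scope.
Local Open Scope classical_set_scope.

(* The scalar field F in {R, C}: Fld R false = R, Fld R true = R[i]. *)
Definition Fld (R : realType) (isC : bool) : numFieldType :=
  if isC then (R[i] : numFieldType) else (R : numFieldType).

Definition toF (R : realType) (isC : bool) : R -> Fld R isC :=
  match isC return R -> Fld R isC with
  | true => fun x : R => (x%:C)%C
  | false => fun x : R => x
  end.

Section GCalculus.
Variable R : realType.
Implicit Types (g : R -> R) (t : R).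

Definition Deltag g t : R := lim (g x @[x --> t^'+]) - g t.

Definition Dg g : set R := [set t | 0 < Deltag g t].

Definition Cg g : set R :=
  [set t | exists e : R, 0 < e /\ forall s, `|s - t| < e -> g s = g t].

Definition Ngminus g : set R :=
  [set x | exists c, Cg g c /\ has_lbound (connected_component (Cg g) c)
                     /\ x = inf (connected_component (Cg g) c) /\ ~ Dg g x].

Definition Ngplus g : set R :=
  [set x | exists c, Cg g c /\ has_ubound (connected_component (Cg g) c)
                     /\ x = sup (connected_component (Cg g) c) /\ ~ Dg g x].

Definition tstar g t : R :=
  if `[< Cg g t >] then sup (connected_component (Cg g) t) else t.

Variable isC : bool.
Local Notation F := (Fld R isC).
Local Notation emb := (@toF R isC).

Definition is_gderiv g (a b : R) (f : R -> F) t (L : F) : Prop :=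
  (Dg g t \/ Cg g t ->
     forall e : F, 0 < e -> exists d : R, 0 < d /\
       forall s, a <= s <= b -> tstar g t < s < tstar g t + d ->
         g s <> g (tstar g t) ->
         `|(f s - f (tstar g t)) / emb (g s - g (tstar g t)) - L| < e) /\
  (~ (Dg g t \/ Cg g t) ->
     forall e : F, 0 < e -> exists d : R, 0 < d /\
       forall s, a <= s <= b -> `|s - t| < d -> g s <> g t ->
         (Ngplus g t \/ t = a -> t < s) ->
         (Ngminus g t \/ t = b -> s < t) ->
         `|(f s - f t) / emb (g s - g t) - L| < e).

Definition gdifferentiable g a b (f : R -> F) t : Prop :=
  exists L, is_gderiv g a b f t L.

(* f'_g(t): the g-derivative (a chosen limit; meaningful when it exists) *)
Definition gderiv g a b (f : R -> F) t : F := xget 0 (is_gderiv g a b f t).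

(* f^{(0)}_g = f, f^{(1)}_g = f'_g *)
Definition gderiv_sigma g a b (f : R -> F) (sj : bool) t : F :=
  if sj then gderiv g a b f t else f t.

End GCalculus.

Definition sigma_card (n : nat) (s : {ffun 'I_n -> bool}) : nat := #|[set j | s j]|.
Definition Fnk (n k : nat) : {set {ffun 'I_n -> bool}} :=
  [set s | sigma_card s == k].

(* Main.v *)
Require Import Defs.
From HB Require Import structures.
From mathcomp Require Import all_boot all_order all_algebra.
From mathcomp Require Import all_classical all_reals all_analysis.
From mathcomp Require Import complex.
Import Order.TTheory GRing.Theory Num.Theory numFieldNormedType.Exports.
Local Open Scope ring_scope.
Local Open Scope classical_set_scope.

Lemma sigma_cardE n (s : {ffun 'I_n -> bool}) : sigma_card s = #|[pred j | s j]|.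
Proof.
rewrite /sigma_card; apply: eq_card => j; rewrite !inE.
by apply/idP/idP; rewrite in_setE.
Qed.

Lemma sigma_card_le n (s : {ffun 'I_n -> bool}) : (sigma_card s <= n)%N.
Proof. by rewrite sigma_cardE; apply: leq_trans (max_card _) _; rewrite card_ord. Qed.

Lemma sigma_card0 n (s : {ffun 'I_n -> bool}) :
  (sigma_card s == 0)%N = (s == [ffun => false]).
Proof.
rewrite sigma_cardE; apply/idP/eqP => [/eqP H|->].
  apply/ffunP => j; rewrite ffunE; apply/negbTE/negP => sj.
  by move/card0_eq: H => /(_ j); rewrite inE sj.
by apply/eqP/eq_card0 => j; rewrite inE ffunE.
Qed.

Lemma prod_expand (K : numFieldType) n (c q : 'I_n -> K) (h : K) :
  \prod_(j < n) (c j + q j * h) - \prod_(j < n) c j =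
  h * \sum_(k < n) h ^+ k * \sum_(sigma in Fnk n k.+1)
      \prod_(j < n) (if sigma j then q j else c j).
Proof.
have E1 : \prod_(j < n) (c j + q j * h) =
   \sum_(s : {ffun 'I_n -> bool}) \prod_(j < n) (if s j then q j * h else c j).
  rewrite (eq_bigr (fun j => \sum_(b : bool) (if b then q j * h else c j))).
    by rewrite bigA_distr_bigA.
  by move=> j _; rewrite big_bool /= addrC.
have E2 : forall s : {ffun 'I_n -> bool},
    \prod_(j < n) (if s j then q j * h else c j) =
    h ^+ sigma_card s * \prod_(j < n) (if s j then q j else c j).
  move=> s; rewrite (bigID (fun j => s j)) /= [in RHS](bigID (fun j => s j)) /=.
  rewrite mulrA; congr (_ * _); last by apply: eq_bigr => j /negbTE ->.
  rewrite (eq_bigr (fun j => q j * h)); last by move=> j ->.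
  rewrite big_split /= mulrC; congr (_ * _); last by apply: eq_bigr => j ->.
  by rewrite prodr_const sigma_cardE.
rewrite E1 (eq_bigr _ (fun s _ => E2 s)).
rewrite (partition_big (fun s => inord (sigma_card s) : 'I_n.+1) xpredT) //=.
rewrite big_ord_recl /=.
rewrite (eq_bigl (fun s => s == [ffun => false])); last first.
  move=> s; rewrite -sigma_card0 -(inj_eq val_inj) /= inordK //.
  by rewrite ltnS sigma_card_le.
rewrite big_pred1_eq.
have -> : sigma_card ([ffun => false] : {ffun 'I_n -> bool}) = 0%N by apply/eqP; rewrite sigma_card0.
rewrite expr0 mul1r.
rewrite (eq_bigr (fun j => if false then q j else c j)); last first.
  by move=> j _; rewrite ffunE.
rewrite addrAC subrr add0r big_distrr /=; apply: eq_bigr => k _.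
rewrite big_distrr /= [in RHS]big_distrr /=.
apply: eq_big => [s|s].
  rewrite inE -(inj_eq val_inj) /= inordK //.
  by rewrite ltnS sigma_card_le.
move=> Hs; rewrite mulrA -exprS; congr (_ ^+ _ * _).
move: Hs; rewrite -(inj_eq val_inj) /= inordK ?ltnS ?sigma_card_le //.
by move/eqP.
Qed.
Section Gen.
Variables (K : numFieldType) (T : Type) (FF : set_system T) (FFF : Filter FF).

Lemma cvg_bigprod (I : finType) (P : pred I) (u : I -> T -> K) (l : I -> K) :
  (forall i, u i x @[x --> FF] --> l i) ->
  (fun s => \prod_(i | P i) u i s) x @[x --> FF] --> \prod_(i | P i) l i.
Proof.
move=> ul; rewrite unlock /=; elim: (index_enum I) => [|i r IH] /=.
  exact: cvg_cst.
case: (P i) => //; exact: cvgM.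
Qed.

Lemma cvg_bigsum (I : finType) (P : pred I) (u : I -> T -> K) (l : I -> K) :
  (forall i, u i x @[x --> FF] --> l i) ->
  (fun s => \sum_(i | P i) u i s) x @[x --> FF] --> \sum_(i | P i) l i.
Proof.
move=> ul; rewrite unlock /=; elim: (index_enum I) => [|i r IH] /=.
  exact: cvg_cst.
case: (P i) => //; exact: cvgD.
Qed.

Lemma cvg_expn (u : T -> K) (l : K) k :
  u x @[x --> FF] --> l -> (fun s => u s ^+ k) x @[x --> FF] --> l ^+ k.
Proof.
move=> ul; elim: k => [|k IH]; first by rewrite expr0; exact: cvg_cst.
under eq_fun do rewrite exprS. rewrite exprS. exact: cvgM.
Qed.
End Gen.

Section LimOn.
Variables (R : realType) (K : numFieldType).

Definition lim_on (A : set R) (x0 : R) (Q : R -> K) (L : K) :=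
  forall e : K, 0 < e -> exists d : R, 0 < d /\
    forall s, A s -> `|s - x0| < d -> `|Q s - L| < e.

Lemma lim_onP A x0 Q L : lim_on A x0 Q L <-> Q x @[x --> within A (nbhs x0)] --> L.
Proof.
split.
  move=> H; apply/cvgrPdist_lt => e e0; rewrite near_withinE.
  have [d [d0 Hd]] := H e e0; apply/nbhs_ballP; exists d => //= s.
  rewrite /ball /= => xs As; rewrite distrC; apply: Hd => //.
  by rewrite distrC.
move/cvgrPdist_lt => H e e0; have := H e e0; rewrite near_withinE.
move/nbhs_ballP => [d /= d0 Hd]; exists d; split => // s As sx.
rewrite distrC; apply: Hd => //; rewrite /ball /= distrC //.
Qed.

Lemma lim_on_unique A x0 Q L1 L2 :
  (forall d : R, 0 < d -> exists s, A s /\ `|s - x0| < d) ->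
  lim_on A x0 Q L1 -> lim_on A x0 Q L2 -> L1 = L2.
Proof.
move=> pts H1 H2; apply/eqP; rewrite -subr_eq0 -normr_eq0; apply/eqP.
apply/eqP; rewrite eq_le normr_ge0 andbT; apply/ler_addgt0Pr => e e0; rewrite add0r.
have e20 : 0 < e / 2 by rewrite divr_gt0.
have [d1 [d10 Hd1]] := H1 _ e20; have [d2 [d20 Hd2]] := H2 _ e20.
have md : 0 < Num.min d1 d2 by rewrite lt_min d10 d20.
have [s [As sd]] := pts _ md.
move: sd; rewrite lt_min => /andP[s1 s2].
have := Hd1 s As s1; have := Hd2 s As s2 => h2 h1.
have -> : L1 - L2 = (L1 - Q s) + (Q s - L2) by rewrite addrA subrK.
apply: ltW; apply: (le_lt_trans (ler_normD _ _)).
by rewrite distrC (splitr e) ltrD.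
Qed.
End LimOn.
Arguments lim_on {R K}.
Arguments lim_onP {R K}.
Arguments lim_on_unique {R K}.

Section ProdLim.
Variables (R : realType) (K : numFieldType) (emb : R -> K) (g : R -> R).

Lemma prod_lim_on (A : set R) x0 n (f : 'I_n -> R -> K) (L : 'I_n -> K) (H : K) :
  (forall s, A s -> emb (g s - g x0) != 0) ->
  (forall j, lim_on A x0 (fun s => (f j s - f j x0) / emb (g s - g x0)) (L j)) ->
  lim_on A x0 (fun s => emb (g s - g x0)) H ->
  lim_on A x0 (fun s => (\prod_(j < n) f j s - \prod_(j < n) f j x0) / emb (g s - g x0))
   (\sum_(k < n) H ^+ k * \sum_(sigma in Fnk n k.+1)
       \prod_(j < n) (if sigma j then L j else f j x0)).
Proof.
move=> Ah fL hH; apply/lim_onP.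
set h := fun s => emb (g s - g x0).
set q := fun j s => (f j s - f j x0) / h s.
pose G := fun s => \sum_(k < n) h s ^+ k * \sum_(sigma in Fnk n k.+1)
       \prod_(j < n) (if sigma j then q j s else f j x0).
have FF : Filter (within A (nbhs x0)) by apply: within_filter.
have HG : G x @[x --> within A (nbhs x0)] --> (\sum_(k < n) H ^+ k * \sum_(sigma in Fnk n k.+1)
       \prod_(j < n) (if sigma j then L j else f j x0)).
rewrite /G.
apply: (@cvg_bigsum _ _ _ _ 'I_n xpredT (fun k s => h s ^+ k * \sum_(sigma in Fnk n k.+1)
       \prod_(j < n) (if sigma j then q j s else f j x0))) => k.
apply: cvgM; first by apply: cvg_expn; apply/lim_onP.
apply: (@cvg_bigsum _ _ _ _ {ffun 'I_n -> bool} (mem (Fnk n k.+1)) (fun sigma s =>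
       \prod_(j < n) (if sigma j then q j s else f j x0))) => sigma.
apply: (@cvg_bigprod _ _ _ _ 'I_n xpredT (fun j s => if sigma j then q j s else f j x0)) => j.
case: (sigma j); first by apply/lim_onP; apply: fL.
exact: cvg_cst.
apply: cvg_trans HG.
  apply: near_eq_cvg; rewrite near_withinE; apply: nearW => s As.
apply/esym; rewrite /G -[RHS](mulKf (Ah s As)).
have := @prod_expand K n (fun j => f j x0) (fun j => q j s) (h s).
move=> /= <-; rewrite [RHS]mulrC.
congr (_ * _); congr (_ - _); apply: eq_bigr => j _.
by rewrite /q divfK ?Ah // addrC subrK.
Qed.
End ProdLim.
Lemma toF_eq0 (R : realType) (isC : bool) (x : R) : (toF isC x == 0) = (x == 0).
Proof.
case: isC => //=.
by apply/eqP/eqP => [[]|->].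
Qed.

Lemma toF_lim_on (R : realType) (isC : bool) A x0 (u : R -> R) l :
  lim_on A x0 u l -> lim_on A x0 (fun s => toF isC (u s)) (toF isC l).
Proof.
case: isC => //= H e e0.
have e0' : 0 < complex.Re e by move: e0; rewrite ltcE => /andP[].
have [d [d0 Hd]] := H _ e0'; exists d; split => // s As sd.
have := Hd s As sd.
rewrite ltcE normc_def /= => hs; apply/andP; split.
  by move: e0; rewrite ltcE /= => /andP[/eqP <-].
by rewrite subr0 expr0n addr0 sqrtr_sqr.
Qed.

Set Implicit Arguments.
Unset Strict Implicit.

Section Geo.
Variables (R : realType) (g : R -> R).
Hypothesis gnd : {homo g : x y / x <= y}.
Hypothesis glc : forall t : R, g x @[x --> t^'-] --> g t.

Lemma itvPinf (t s : R) : [set` Interval (BRight t) +oo%O] s <-> t < s.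
Proof. by rewrite /mkset /= in_itv /= andbT. Qed.

Let I t := g @` [set` Interval (BRight t) +oo%O].

Lemma rlim t : g x @[x --> t^'+] --> inf (I t).
Proof.
have h1 : (BRight t < +oo)%O by [].
have h2 : {in Interval (BRight t) +oo%O &, {homo g : n m / n <= m}}.
  by move=> x y _ _; apply: gnd.
have h3 : has_lbound (I t).
  exists (g t) => _ [s /itvPinf ts <-].
  by apply: gnd; apply: ltW.
exact: (nondecreasing_at_right_cvgr h1 h2 h3).
Qed.

Lemma I_ne t : I t !=set0.
Proof. by exists (g (t + 1)), (t + 1) => //; apply/itvPinf; rewrite ltrDl. Qed.

Lemma I_lb t : has_lbound (I t).
Proof.
exists (g t) => _ [s /itvPinf ts <-].
by apply: gnd; apply: ltW.
Qed.

Lemma DeltagE t : Deltag g t = inf (I t) - g t.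
Proof. by rewrite /Deltag (cvg_lim (@Rhausdorff R) (@rlim t)). Qed.

Lemma inf_ge t : g t <= inf (I t).
Proof.
apply: lb_le_inf; first exact: I_ne.
by move=> _ [s /= + <-]; rewrite in_itv /= andbT => ts; apply: gnd; apply: ltW.
Qed.

Lemma inf_le t s : t < s -> inf (I t) <= g s.
Proof.
move=> ts; apply: ge_inf; first exact: I_lb.
by exists s => //; apply/itvPinf.
Qed.

Lemma Deltag_ge0 t : 0 <= Deltag g t.
Proof. by rewrite DeltagE subr_ge0 inf_ge. Qed.

Lemma Dg_neq t s : Dg g t -> t < s -> g s <> g t.
Proof.
rewrite /Dg /= DeltagE subr_gt0 => H ts E.
by have := @inf_le t s ts; rewrite E => /(lt_le_trans H); rewrite ltxx.
Qed.

Lemma notDg_Deltag0 t : ~ Dg g t -> Deltag g t = 0.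
Proof.
rewrite /Dg /= => /negP; rewrite -leNgt => H.
by apply/eqP; rewrite eq_le H Deltag_ge0.
Qed.

Lemma notDg_cont t : ~ Dg g t -> g x @[x --> t] --> g t.
Proof.
move=> nD; apply/left_right_continuousP; split; first exact: glc.
have := notDg_Deltag0 nD; rewrite DeltagE => /eqP; rewrite subr_eq0 => /eqP <-.
exact: rlim.
Qed.


Lemma Cg_ball x : Cg g x -> exists e : R, 0 < e /\
  forall z, `|z - x| < e -> g z = g x /\ Cg g z.
Proof.
move=> [e [e0 H]]; exists e; split => // z zx; split; first exact: H.
exists (e - `|z - x|); split; first by rewrite subr_gt0.
move=> s sz; rewrite (H z zx); apply: H.
have -> : s - x = (s - z) + (z - x) by rewrite addrA subrK.
apply: (le_lt_trans (ler_normD _ _)).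
by rewrite -ltrBrDr.
Qed.

Notation comp := (connected_component (Cg g)).

Lemma comp_interval c : is_interval (comp c).
Proof. by apply/connected_intervalP; apply: component_connected. Qed.

Lemma comp_refl c : Cg g c -> comp c c.
Proof. exact: connected_component_refl. Qed.

Lemma comp_sub c y : comp c y -> Cg g y.
Proof. exact: connected_component_sub. Qed.

Lemma comp_intro c y : c <= y -> (forall z, c <= z <= y -> Cg g z) -> comp c y.
Proof.
move=> cy H; exists [set z | c <= z <= y]; last by rewrite /= cy lexx.
split => //=; first by rewrite lexx cy.
apply/connected_intervalP => x1 x2 /= /andP[c1 _] /andP[_ x2y] z /andP[z1 z2].
by rewrite (le_trans c1 z1) (le_trans z2 x2y).
Qed.

Lemma comp_intro' c y : y <= c -> (forall z, y <= z <= c -> Cg g z) -> comp c y.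
Proof.
move=> cy H; exists [set z | y <= z <= c]; last by rewrite /= cy lexx.
split => //=; first by rewrite lexx cy.
apply/connected_intervalP => x1 x2 /= /andP[c1 _] /andP[_ x2y] z /andP[z1 z2].
by rewrite (le_trans c1 z1) (le_trans z2 x2y).
Qed.

Lemma comp_between c y z : Cg g c -> comp c y ->
  (c <= z <= y \/ y <= z <= c) -> Cg g z.
Proof.
move=> Cc cy H; apply: (@comp_sub c z); have ci := @comp_interval c.
have cc := comp_refl Cc.
by case: H => H; [apply: (ci c y) | apply: (ci y c)].
Qed.

Lemma Cg_const u v : u <= v -> (forall z, u <= z <= v -> Cg g z) -> g v = g u.
Proof.
move=> uv H.
pose S := [set w | u <= w <= v /\ g w = g u].
have Su : S u by rewrite /S /= lexx uv.
have hS : has_sup S by split; [exists u | exists v => w [/andP[]]].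
set w0 := sup S.
have uw0 : u <= w0 by apply: ub_le_sup; [case: hS|].
have w0v : w0 <= v by apply: ge_sup; [exists u| move=> w [/andP[]]].
have Hw0 : u <= w0 <= v by rewrite uw0 w0v.
have [e [e0 He]] := Cg_ball (H _ Hw0).
have [w [uw [gw]] w0w] := sup_adherent e0 hS.
have ww0 : w <= w0 by apply: ub_le_sup; [case: hS|].
have gw0 : g w0 = g u.
  rewrite -gw; apply/esym; apply: (fun h => proj1 (He w h)).
  by rewrite ler0_norm ?subr_le0 // opprB ltrBlDr -ltrBlDl.
have [w0v'|] := ltP w0 v; last first.
  by move=> vw0; have -> : v = w0 by apply/eqP; rewrite eq_le w0v vw0.
pose p := Num.min (w0 + e / 2) v.
have w0p : w0 < p by rewrite lt_min w0v' ltrDl divr_gt0.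
have Sp : S p.
  split; first by rewrite (le_trans uw0 (ltW w0p)) ge_min lexx orbT.
  rewrite -gw0; apply: (fun h => proj1 (He p h)).
  rewrite gtr0_norm ?subr_gt0 // ltrBlDl.
  apply: (@le_lt_trans _ _ (w0 + e / 2)); first by rewrite ge_min lexx.
  by rewrite ltrD2l ltr_pdivrMr // ltr_pMr // ltr1n.
have := ub_le_sup (proj2 hS) Sp; rewrite -/w0 => /(lt_le_trans w0p).
by rewrite ltxx.
Qed.

Lemma near_left_cst x0 c v : c < x0 -> (forall z, c < z < x0 -> g z = v) ->
  \forall z \near x0^'-, g z = v.
Proof.
move=> cx H; rewrite near_withinE; apply/nbhs_ballP; exists (x0 - c) => /=.
  by rewrite subr_gt0.
move=> z; rewrite /ball /= => xz zx; apply: H; rewrite zx andbT.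
move: xz; rewrite gtr0_norm ?subr_gt0 // ltrD2l ltrN2 //.
Qed.

Lemma sup_side c : Cg g c -> has_ubound (comp c) ->
  [/\ c < sup (comp c), ~ Cg g (sup (comp c)),
      (forall z, c <= z < sup (comp c) -> Cg g z) &
      (forall z, c <= z <= sup (comp c) -> g z = g c)].
Proof.
move=> Cc ub; set x0 := sup (comp c).
have cc := comp_refl Cc.
have hs : has_sup (comp c) by split => //; exists c.
have S1 : c <= x0 by apply: ub_le_sup.
have S2 : forall z, c <= z < x0 -> Cg g z.
  move=> z /andP[cz zx]; have : 0 < x0 - z by rewrite subr_gt0.
  move=> /sup_adherent /(_ hs) [y cy]; rewrite opprB addrCA subrr addr0 => zy.
  by apply: (comp_between Cc cy); left; rewrite cz ltW.
have S3 : ~ Cg g x0.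
  move=> Cx; have [e [e0 He]] := Cg_ball Cx.
  have e20 : 0 < e / 2 by rewrite divr_gt0.
  have cp : comp c (x0 + e / 2).
    apply: comp_intro; first by rewrite (le_trans S1) // lerDl ltW.
    move=> z /andP[cz zp]; have [zx|xz] := ltP z x0; first by apply: S2; rewrite cz.
    apply: (fun h => proj2 (He z h)).
    rewrite ger0_norm ?subr_ge0 // ltrBlDl (le_lt_trans zp) // ltrD2l.
    by rewrite ltr_pdivrMr // ltr_pMr // ltr1n.
  have := ub_le_sup ub cp; rewrite -/x0 => H.
  have : x0 < x0 + e / 2 by rewrite ltrDl.
  by rewrite ltNge H.
have S4 : c < x0.
  by rewrite lt_neqAle S1 andbT; apply/eqP => E; apply: S3; rewrite -E.
have S5 : forall z, c <= z < x0 -> g z = g c.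
  move=> z /andP[cz zx]; apply: Cg_const => // w /andP[cw wz].
  by apply: S2; rewrite cw (le_lt_trans wz).
split => // z /andP[cz zx]; have [zx'|] := ltP z x0; first by apply: S5; rewrite cz.
move=> xz; have -> : z = x0 by apply/eqP; rewrite eq_le zx xz.
have L1 := cvg_lim (@Rhausdorff R) (@glc x0).
have L2 : lim (g x @[x --> x0^'-]) = g c.
  apply: (lim_near_cst (@Rhausdorff R)); apply: (near_left_cst S4).
  by move=> w /andP[cw wx]; apply: S5; rewrite wx ltW.
by rewrite -L1 L2.
Qed.

Lemma inf_side c : Cg g c -> has_lbound (comp c) -> ~ Dg g (inf (comp c)) ->
  [/\ inf (comp c) < c, ~ Cg g (inf (comp c)),
      (forall z, inf (comp c) < z <= c -> Cg g z) &
      (forall z, inf (comp c) <= z <= c -> g z = g c)].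
Proof.
move=> Cc lb nD; set x0 := inf (comp c).
have cc := comp_refl Cc.
have hs : has_inf (comp c) by split => //; exists c.
have S1 : x0 <= c by apply: ge_inf.
have S2 : forall z, x0 < z <= c -> Cg g z.
  move=> z /andP[xz zc]; have : 0 < z - x0 by rewrite subr_gt0.
  move=> /inf_adherent /(_ hs) [y cy]; rewrite addrCA subrr addr0 => yz.
  by apply: (comp_between Cc cy); right; rewrite zc ltW.
have S3 : ~ Cg g x0.
  move=> Cx; have [e [e0 He]] := Cg_ball Cx.
  have e20 : 0 < e / 2 by rewrite divr_gt0.
  have cp : comp c (x0 - e / 2).
    apply: comp_intro'; first by rewrite (le_trans _ S1) // gerDl oppr_le0 ltW.
    move=> z /andP[pz zc]; have [xz|zx] := ltP x0 z; first by apply: S2; rewrite xz.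
    apply: (fun h => proj2 (He z h)).
    rewrite ler0_norm ?subr_le0 // opprB ltrBlDl -ltrBlDr (lt_le_trans _ pz) //.
    rewrite ltrD2l ltrN2.
    by rewrite ltr_pdivrMr // ltr_pMr // ltr1n.
  have := ge_inf lb cp; rewrite -/x0 => H.
  have : x0 - e / 2 < x0 by rewrite gtrDl oppr_lt0.
  by rewrite ltNge H.
have S4 : x0 < c.
  by rewrite lt_neqAle S1 andbT; apply/eqP => E; apply: S3; rewrite E.
have S5 : forall z, x0 < z <= c -> g z = g c.
  move=> z /andP[xz zc]; apply/esym; apply: Cg_const => // w /andP[zw wc].
  by apply: S2; rewrite wc (lt_le_trans xz zw).
split => // z /andP[xz zc]; have [xz'|] := ltP x0 z; first by apply: S5; rewrite xz'.
move=> zx; have -> : z = x0 by apply/eqP; rewrite eq_le zx xz.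
have := notDg_Deltag0 nD; rewrite DeltagE => /eqP; rewrite subr_eq0 => /eqP E.
rewrite -/x0 in E; apply/eqP; rewrite eq_le (gnd S1) /= -E.
apply: lb_le_inf; first exact: I_ne.
move=> _ [w /itvPinf xw <-]; have [wc|cw] := leP w c.
  by rewrite S5 // xw wc.
by apply: gnd; apply: ltW.
Qed.

Lemma Ngplus_left x : Ngplus g x ->
  exists y, y < x /\ ~ Cg g x /\ forall z, y <= z <= x -> g z = g x.
Proof.
move=> [c [Cc [ub [-> _]]]]; have [S4 S3 _ S6] := sup_side Cc ub.
exists c; split => //; split => // z zx; rewrite S6 // ?S6 //.
by rewrite (ltW S4) lexx.
Qed.

Lemma Ngminus_right x : Ngminus g x ->
  exists y, x < y /\ ~ Cg g x /\ forall z, x <= z <= y -> g z = g x.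
Proof.
move=> [c [Cc [lb [-> nD]]]]; have [S4 S3 _ S6] := inf_side Cc lb nD.
exists c; split => //; split => // z zx; rewrite S6 // ?S6 //.
by rewrite (ltW S4) lexx.
Qed.

Lemma sides_Cg x y1 y2 : y1 < x -> x < y2 ->
  (forall z, y1 <= z <= x -> g z = g x) -> (forall z, x <= z <= y2 -> g z = g x) ->
  Cg g x.
Proof.
move=> y1x xy2 H1 H2; exists (Num.min (x - y1) (y2 - x)); split.
  by rewrite lt_min !subr_gt0 y1x xy2.
move=> s; rewrite lt_min => /andP[h1 h2]; have [sx|xs] := leP s x.
  apply: H1; rewrite sx andbT; move: h1; rewrite ler0_norm ?subr_le0 //.
  by rewrite opprB ltrD2l ltrN2 => /ltW.
apply: H2; rewrite (ltW xs) /=; move: h2; rewrite gtr0_norm ?subr_gt0 //.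
by rewrite ltrD2r => /ltW.
Qed.

Lemma not_plus_minus x : Ngplus g x -> Ngminus g x -> False.
Proof.
move=> /Ngplus_left [y1 [y1x [nC H1]]] /Ngminus_right [y2 [xy2 [_ H2]]].
by apply: nC; apply: (sides_Cg y1x xy2).
Qed.

Lemma Cg_int x y : (forall z, x <= z <= y -> g z = g x) ->
  forall w, x < w < y -> Cg g w.
Proof.
move=> H w /andP[xw wy]; exists (Num.min (w - x) (y - w)); split.
  by rewrite lt_min !subr_gt0 xw wy.
move=> s; rewrite lt_min => /andP[h1 h2].
have Hs : x <= s <= y.
  have [sw|ws] := leP s w.
    rewrite (le_trans sw (ltW wy)) andbT; move: h1.
    by rewrite ler0_norm ?subr_le0 // opprB ltrD2l ltrN2 => /ltW.
  rewrite (le_trans (ltW xw) (ltW ws)) /=; move: h2.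
  by rewrite gtr0_norm ?subr_gt0 // ltrD2r => /ltW.
by rewrite (H s Hs) (H w) // !ltW.
Qed.

Lemma NM x y : ~ Cg g x -> ~ Dg g x -> x < y ->
  (forall z, x <= z <= y -> g z = g x) -> Ngminus g x.
Proof.
move=> nC nD xy H; set c := (x + y) / 2.
have xc : x < c by rewrite /c ltr_pdivlMr // mulr_natr mulr2n ltrD2l.
have cy : c < y by rewrite /c ltr_pdivrMr // mulr_natr mulr2n ltrD2r.
have Ci := Cg_int H.
have Cc : Cg g c by apply: Ci; rewrite xc cy.
have cc := comp_refl Cc.
have lb : lbound (comp c) x.
  move=> z cz; rewrite leNgt; apply/negP => zx; apply: nC.
  by apply: (comp_between Cc cz); right; rewrite (ltW zx) (ltW xc).
have hl : has_lbound (comp c) by exists x.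
exists c; split => //; split => //; split => //.
apply/eqP; rewrite eq_le lb_le_inf ?andbT //; last by exists c.
apply/ler_addgt0Pr => e e0.
have zc : comp c (Num.min (x + e) c).
  apply: comp_intro'; first by rewrite ge_min lexx orbT.
  move=> w /andP[zw wc]; apply: Ci; rewrite (le_lt_trans wc cy) andbT.
  by apply: (lt_le_trans _ zw); rewrite lt_min xc ltrDl e0.
by apply: (le_trans (ge_inf hl zc)); rewrite ge_min lexx.
Qed.

Lemma NP x y : ~ Cg g x -> ~ Dg g x -> y < x ->
  (forall z, y <= z <= x -> g z = g x) -> Ngplus g x.
Proof.
move=> nC nD yx H; set c := (y + x) / 2.
have yc : y < c by rewrite /c ltr_pdivlMr // mulr_natr mulr2n ltrD2l.
have cx : c < x by rewrite /c ltr_pdivrMr // mulr_natr mulr2n ltrD2r.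
have H' : forall z, y <= z <= x -> g z = g y.
  by move=> z zh; rewrite H // (H y) // lexx (ltW yx).
have Ci := Cg_int H'.
have Cc : Cg g c by apply: Ci; rewrite yc cx.
have cc := comp_refl Cc.
have ub : ubound (comp c) x.
  move=> z cz; rewrite leNgt; apply/negP => zx; apply: nC.
  by apply: (comp_between Cc cz); left; rewrite (ltW zx) (ltW cx).
have hu : has_ubound (comp c) by exists x.
exists c; split => //; split => //; split => //.
apply/eqP; rewrite eq_le ge_sup ?andbT //; last by exists c.
apply/ler_addgt0Pr => e e0; rewrite -lerBlDr.
have zc : comp c (Num.max (x - e) c).
  apply: comp_intro; first by rewrite le_max lexx orbT.
  move=> w /andP[cw wz]; apply: Ci; rewrite (lt_le_trans yc cw) /=.
  by apply: (le_lt_trans wz); rewrite gt_max cx gtrDl oppr_lt0 e0.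
by apply: (le_trans _ (ub_le_sup hu zc)); rewrite le_max lexx.
Qed.

Lemma Cg_Deltag0 t : Cg g t -> Deltag g t = 0.
Proof.
move=> Ct; have [e [e0 He]] := Cg_ball Ct.
rewrite DeltagE; apply/eqP; rewrite subr_eq0 eq_le inf_ge andbT.
have e20 : 0 < e / 2 by rewrite divr_gt0.
rewrite -(proj1 (He (t + e / 2) _)); first by apply: inf_le; rewrite ltrDl.
rewrite addrAC subrr add0r gtr0_norm //.
by rewrite ltr_pdivrMr // ltr_pMr // ltr1n.
Qed.

Lemma RP a b x0 : a <= x0 -> x0 < b ->
  ~ (exists y2, x0 < y2 /\ forall z, x0 <= z <= y2 -> g z = g x0) ->
  forall d, 0 < d -> exists s, ((a <= s <= b) /\ x0 < s /\ g s <> g x0) /\ `|s - x0| < d.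
Proof.
move=> ax xb nE d d0; apply: contrapT => nP; apply: nE.
set m := Num.min d (b - x0).
have m0 : 0 < m by rewrite lt_min d0 subr_gt0.
exists (x0 + m / 2); split; first by rewrite ltrDl divr_gt0.
move=> z /andP[xz zm]; have [->//|xz'] := eqVneq z x0.
have xz2 : x0 < z by rewrite lt_neqAle eq_sym xz' xz.
apply: contrapT => gz; apply: nP; exists z; split; last first.
  rewrite gtr0_norm ?subr_gt0 // ltrBlDl (le_lt_trans zm) // ltrD2l.
  apply: (@lt_le_trans _ _ m); last by rewrite ge_min lexx.
  by rewrite ltr_pdivrMr // ltr_pMr // ltr1n.
split => //; rewrite (le_trans ax (ltW xz2)) /=.
apply: (le_trans zm); rewrite -lerBrDl; apply: (@le_trans _ _ m).
  by rewrite ler_pdivrMr // ler_pMr // ler1n.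
by rewrite ge_min lexx orbT.
Qed.

Lemma LP a b x0 : a < x0 -> x0 <= b ->
  ~ (exists y1, y1 < x0 /\ forall z, y1 <= z <= x0 -> g z = g x0) ->
  forall d, 0 < d -> exists s, ((a <= s <= b) /\ s < x0 /\ g s <> g x0) /\ `|s - x0| < d.
Proof.
move=> ax xb nE d d0; apply: contrapT => nP; apply: nE.
set m := Num.min d (x0 - a).
have m0 : 0 < m by rewrite lt_min d0 subr_gt0.
have m2 : m / 2 < m by rewrite ltr_pdivrMr // ltr_pMr // ltr1n.
exists (x0 - m / 2); split; first by rewrite gtrDl oppr_lt0 divr_gt0.
move=> z /andP[zm xz]; have [->//|xz'] := eqVneq z x0.
have xz2 : z < x0 by rewrite lt_neqAle xz' xz.
apply: contrapT => gz; apply: nP; exists z; split; last first.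
  rewrite ltr0_norm ?subr_lt0 // opprB ltrBlDl -ltrBlDr.
  apply: (lt_le_trans _ zm); rewrite ltrD2l ltrN2.
  by apply: (lt_le_trans m2); rewrite ge_min lexx.
split => //; rewrite (le_trans (ltW xz2) xb) andbT.
apply: le_trans zm; rewrite lerBrDl -lerBrDr; apply: (le_trans (ltW m2)).
by rewrite ge_min lexx orbT.
Qed.

Lemma HL1 (A : set R) x0 : (forall s, A s -> x0 < s) ->
  lim_on A x0 (fun s => g s - g x0) (Deltag g x0).
Proof.
move=> Ax e e0; have := @rlim x0; move/cvgrPdist_lt => /(_ e e0).
rewrite near_withinE => /nbhs_ballP [d /= d0 Hd]; exists d; split => // s As sd.
have := Hd s; rewrite /ball /= distrC => /(_ sd (Ax s As)).
by rewrite DeltagE opprB addrA subrK distrC.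
Qed.

Lemma HL2 (A : set R) t : ~ Dg g t ->
  lim_on A t (fun s => g s - g t) (Deltag g t).
Proof.
move=> nD e e0; have := notDg_cont nD; move/cvgrPdist_lt => /(_ e e0).
move=> /nbhs_ballP [d /= d0 Hd]; exists d; split => // s As sd.
have := Hd s; rewrite /ball /= distrC => /(_ sd).
by rewrite notDg_Deltag0 // subr0 distrC.
Qed.

Lemma tstar_notC t : ~ Cg g t -> tstar g t = t.
Proof. by move=> nC; rewrite /tstar asboolF. Qed.

Lemma branch1 a b t : a <= t <= b -> (Dg g t \/ Cg g t) ->
  ~ (Dg g b \/ Cg g b \/ Ngplus g b) ->
  [/\ a <= tstar g t, tstar g t < b, ~ Cg g (tstar g t) &
      (Dg g (tstar g t) \/ (Ngplus g (tstar g t) /\ ~ Dg g (tstar g t)))].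
Proof.
move=> /andP[aT tb] DC nb; have [Ct|nCt] := pselect (Cg g t); last first.
  rewrite tstar_notC //; case: DC => // Dt.
  split => //; last by left.
  rewrite lt_neqAle tb andbT; apply/eqP => tbE; apply: nb; left; rewrite -tbE //.
rewrite /tstar asboolT //.
have ubb : ubound (comp t) b.
  move=> y cy; rewrite leNgt; apply/negP => by_; apply: nb; right; left.
  by apply: (comp_between Ct cy); left; rewrite tb ltW.
have ub : has_ubound (comp t) by exists b.
have [S4 S3 _ S6] := sup_side Ct ub.
have xb : sup (comp t) <= b by apply: ge_sup => //; exists t; apply: comp_refl.
have [Dx|nDx] := pselect (Dg g (sup (comp t))).
  split => //; first by rewrite (le_trans aT) // ltW.
    rewrite lt_neqAle xb andbT; apply/eqP => E; apply: nb; left; rewrite -E //.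
  by left.
have Np : Ngplus g (sup (comp t)) by exists t.
split => //; first by rewrite (le_trans aT) // ltW.
  rewrite lt_neqAle xb andbT; apply/eqP => E; apply: nb; right; right; rewrite -E //.
by right.
Qed.

Lemma branch2_points a b t : a < b -> a <= t <= b -> ~ Dg g t -> ~ Cg g t ->
  ~ Ngminus g a -> ~ (Dg g b \/ Cg g b \/ Ngplus g b) ->
  forall d, 0 < d -> exists s, ((a <= s <= b) /\ g s <> g t /\
     (Ngplus g t \/ t = a -> t < s) /\ (Ngminus g t \/ t = b -> s < t)) /\ `|s - t| < d.
Proof.
move=> ab /andP[aT tb] nD nC na nb d d0.
have nE2 : Ngplus g t \/ t = a ->
    ~ (exists y2, t < y2 /\ forall z, t <= z <= y2 -> g z = g t).
  move=> [Np|ta] [y2 [ty2 H2]].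
    have [y1 [y1t [_ H1]]] := Ngplus_left Np.
    by apply: nC; apply: (sides_Cg y1t ty2).
  by apply: na; rewrite -ta; apply: (NM nC nD ty2).
have nE1 : Ngminus g t \/ t = b ->
    ~ (exists y1, y1 < t /\ forall z, y1 <= z <= t -> g z = g t).
  move=> [Nm|tbE] [y1 [y1t H1]].
    have [y2 [ty2 [_ H2]]] := Ngminus_right Nm.
    by apply: nC; apply: (sides_Cg y1t ty2).
  by apply: nb; right; right; rewrite -tbE; apply: (NP nC nD y1t).
have [P|nP] := pselect (Ngplus g t \/ t = a).
  have nQ : ~ (Ngminus g t \/ t = b).
    case: P => [Np|ta] [Nm|tbE].
    - exact: not_plus_minus Np Nm.
    - by apply: nb; right; right; rewrite -tbE.
    - by apply: na; rewrite -ta.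
    - by move: ab; rewrite -ta -tbE ltxx.
  have tb' : t < b.
    by rewrite lt_neqAle tb andbT; apply/eqP => E; apply: nQ; right.
  have [s [[sab [ts gs]] sd]] := RP aT tb' (nE2 P) d0.
  by exists s; split => //; split => //; split => //; split => // /nQ.
have [Q|nQ] := pselect (Ngminus g t \/ t = b).
  have aT' : a < t.
    by rewrite lt_neqAle aT andbT; apply/eqP => E; apply: nP; right.
  have [s [[sab [ts gs]] sd]] := LP aT' tb (nE1 Q) d0.
  by exists s; split => //; split => //; split => // /nP.
have aT' : a < t by rewrite lt_neqAle aT andbT; apply/eqP => E; apply: nP; right.
have tb' : t < b by rewrite lt_neqAle tb andbT; apply/eqP => E; apply: nQ; right.
have [E2|nE2'] := pselect (exists y2, t < y2 /\ forall z, t <= z <= y2 -> g z = g t).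
  have nE1' : ~ (exists y1, y1 < t /\ forall z, y1 <= z <= t -> g z = g t).
    move=> [y1 [y1t H1]]; case: E2 => [y2 [ty2 H2]].
    by apply: nC; apply: (sides_Cg y1t ty2).
  have [s [[sab [ts gs]] sd]] := LP aT' tb nE1' d0.
  by exists s; split => //; split => //; split => // /nP.
have [s [[sab [ts gs]] sd]] := RP aT tb' nE2' d0.
by exists s; split => //; split => //; split => // /nP.
Qed.

End Geo.

Set Implicit Arguments.
Unset Strict Implicit.

Definition quot (R : realType) (isC : bool) (g : R -> R) (f : R -> Fld R isC) x0 s :=
  (f s - f x0) / toF isC (g s - g x0).
Definition A1 (R : realType) (g : R -> R) (a b x0 : R) (s : R) : Prop :=
  (a <= s <= b) /\ x0 < s /\ g s <> g x0.
Definition A2 (R : realType) (g : R -> R) (a b t : R) (s : R) : Prop :=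
  (a <= s <= b) /\ g s <> g t /\ (Ngplus g t \/ t = a -> t < s) /\
  (Ngminus g t \/ t = b -> s < t).

Lemma GD1 (R : realType) (isC : bool) (g : R -> R) a b (f : R -> Fld R isC) t L :
  Dg g t \/ Cg g t ->
  is_gderiv g a b f t L <->
  lim_on (A1 g a b (tstar g t)) (tstar g t) (quot g f (tstar g t)) L.
Proof.
move=> DC; split.
  move=> [H _] e e0; have [d [d0 Hd]] := H DC e e0; exists d; split => //.
  move=> s [sab [xs gs]] sd; apply: Hd => //; rewrite xs /= -ltrBlDl.
  by rewrite gtr0_norm ?subr_gt0 in sd.
move=> H; split => [_ e e0|//]; have [d [d0 Hd]] := H e e0; exists d; split => //.
move=> s sab /andP[xs sxd] gs; apply: Hd; first by split.
by rewrite gtr0_norm ?subr_gt0 // ltrBlDl.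
Qed.

Lemma GD2 (R : realType) (isC : bool) (g : R -> R) a b (f : R -> Fld R isC) t L :
  ~ (Dg g t \/ Cg g t) ->
  is_gderiv g a b f t L <-> lim_on (A2 g a b t) t (quot g f t) L.
Proof.
move=> nDC; split.
  move=> [_ H] e e0; have [d [d0 Hd]] := H nDC e e0; exists d; split => //.
  by move=> s [sab [gs [P Q]]] sd; apply: Hd.
move=> H; split => [//|_ e e0]; have [d [d0 Hd]] := H e e0; exists d; split => //.
by move=> s sab sd gs P Q; apply: Hd => //; split.
Qed.

Unset Implicit Arguments.
Set Strict Implicit.

Theorem proposition2p7 (R : realType) (isC : bool) (g : R -> R) (a b : R)
  (g_nondecr : {homo g : x y / x <= y})
  (g_leftcont : forall t : R, g x @[x --> t^'-] --> g t)
  (ab : a < b) (a_notin : ~ Ngminus g a)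
  (b_notin : ~ (Dg g b \/ Cg g b \/ Ngplus g b))
  (n : nat) (n_ge2 : (2 <= n)%N) (t : R) (t_in : a <= t <= b)
  (f : 'I_n -> R -> Fld R isC)
  (f_diff : forall j : 'I_n, gdifferentiable g a b (f j) t) :
  gdifferentiable g a b (fun s => \prod_(j < n) f j s) t /\
  gderiv g a b (fun s => \prod_(j < n) f j s) t =
    \sum_(k < n) (toF isC (Deltag g (tstar g t))) ^+ k *
      (\sum_(sigma in Fnk n k.+1)
         \prod_(j < n) gderiv_sigma g a b (f j) (sigma j) (tstar g t)).
Proof.
set x0 := tstar g t.
have key : exists A : set R,
  [/\ (forall d, 0 < d -> exists s, A s /\ `|s - x0| < d),
   (forall s, A s -> g s <> g x0),
   lim_on A x0 (fun s => g s - g x0) (Deltag g x0),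
   (forall (h : R -> Fld R isC) L, is_gderiv g a b h t L <-> lim_on A x0 (quot g h x0) L) &
   (forall (h : R -> Fld R isC) L, is_gderiv g a b h x0 L <-> lim_on A x0 (quot g h x0) L)].
  have [DC|nDC] := pselect (Dg g t \/ Cg g t).
    have [ax xb nCx Hx] := branch1 g_leftcont t_in DC b_notin.
    rewrite -/x0 in ax xb nCx Hx.
    exists (A1 g a b x0); split.
    - move=> d d0; have nE : ~ (exists y2, x0 < y2 /\ forall z, x0 <= z <= y2 -> g z = g x0).
        move=> [y2 [xy2 H2]]; case: Hx => [Dx|[Np nDx]].
          by apply: (Dg_neq g_nondecr Dx xy2); apply: H2; rewrite ltW // lexx.
        have [y1 [y1x [_ H1]]] := Ngplus_left g_leftcont Np.
        by apply: nCx; apply: (sides_Cg y1x xy2).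
      have [s [As sd]] := RP ax xb nE d0; by exists s.
    - by move=> s [_ []].
    - by apply: HL1 => // s [_ []].
    - by move=> h L; apply: GD1.
    - move=> h L; case: Hx => [Dx|[Np nDx]].
        by rewrite (GD1 _ _ _ _ (or_introl Dx)) tstar_notC.
      have nDC' : ~ (Dg g x0 \/ Cg g x0) by case.
      rewrite (GD2 _ _ _ _ nDC').
      have -> : A2 g a b x0 = A1 g a b x0 => //.
      apply/funext => s; apply/propext; split.
        by move=> [sab [gs [P Q]]]; split => //; split => //; apply: P; left.
      move=> [sab [xs gs]]; split => //; split => //; split => // -[Nm|E].
        by case: (not_plus_minus g_nondecr g_leftcont Np Nm).
      by move: xb; rewrite E ltxx.
  have nD : ~ Dg g t by move=> D; apply: nDC; left.
  have nC : ~ Cg g t by move=> C; apply: nDC; right.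
  have xt : x0 = t by rewrite /x0 tstar_notC.
  rewrite xt; exists (A2 g a b t); split.
  - exact: (branch2_points g_nondecr g_leftcont ab t_in nD nC a_notin b_notin).
  - by move=> s [_ []].
  - exact: (HL2 g_nondecr g_leftcont).
  - by move=> h L; apply: GD2.
  - by move=> h L; apply: GD2.
have [A [pts Ag hA Ht Hx]] := key.
have emb0 : forall s, A s -> toF isC (g s - g x0) != 0.
  by move=> s As; rewrite toF_eq0 subr_eq0; apply/eqP; exact: Ag.
have dj : forall j, lim_on A x0 (quot g (f j) x0) (gderiv g a b (f j) x0).
  move=> j; have [L hL] := f_diff j.
  have hL' : is_gderiv g a b (f j) x0 L by apply/Hx; apply/Ht.
  by apply/Hx; rewrite /gderiv; apply: (xgetI 0 hL').
have Hprod := @prod_lim_on R _ (toF isC) g A x0 n f _ _ emb0 dj (@toF_lim_on R isC A x0 _ _ hA).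
set Form := (X in lim_on _ _ _ X) in Hprod.
have Hp : is_gderiv g a b (fun s => \prod_(j < n) f j s) t Form by apply/Ht.
split; first by exists Form.
rewrite /gderiv (xget_unique 0 Hp); last first.
  move=> y Py; apply: (lim_on_unique _ _ _ _ _ pts (proj1 (Ht _ _) Py) (proj1 (Ht _ _) Hp)).
rewrite /Form; apply: eq_bigr => k _; congr (_ * _); apply: eq_bigr => sigma _.
Qed.
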